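(* Let $G$ and $H$ be connected graphs. If $\mathcal{S}(G)$ is an independent set of $G$ and $\mu_t(G)=|\mathcal{S}(G)|$, then $$\mu_t(G\,\Box\,H)=\mu_t(G)\,\mu_t(H).$$
   Context: All graphs are finite, simple and undirected. The Cartesian product $G\,\Box\,H$ has vertex set $V(G)\times V(H)$, with $(x,y)$ adjacent to $(x',y')$ iff either $x=x'$ and $yy'\in E(H)$, or $xx'\in E(G)$ and $y=y'$. Let $F$ be a connected graph and $X\subseteq V(F)$. Two vertices $x,y\in V(F)$ are $X$-visible if there exists a shortest $x,y$-path in $F$ none of whose internal vertices belongs to $X$. $X$ is a total mutual-visibility set of $F$ if every two vertices of $F$ are $X$-visible (the empty set is allowed). $\mu_t(F)$ is the maximum cardinality of a total mutual-visibility set of $F$. A vertex is simplicial if its neighbors induce a complete graph; $\mathcal{S}(F)$ is the set of simplicial vertices of $F$. *)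

(* Defs.v *)
From mathcomp Require Import all_boot.
From mathcomp Require Import boolp.
Set Implicit Arguments. Unset Strict Implicit. Unset Printing Implicit Defensive.

Definition simple_graph (T : finType) (e : rel T) : Prop :=
  symmetric e /\ irreflexive e.

Definition connected_graph (T : finType) (e : rel T) : Prop :=
  forall x y : T, connect e x y.

Definition cart_rel (T U : finType) (e : rel T) (f : rel U) : rel (T * U) :=
  fun a b => ((a.1 == b.1) && f a.2 b.2) || (e a.1 b.1 && (a.2 == b.2)).

(* A walk from x is x :: p (consecutive vertices adjacent); it ends at
   [last x p] and has length [size p].  A shortest x,y-path is an x,y-walk of
   minimum length (such a walk is automatically a path). *)
Definition shortest_path (T : finType) (e : rel T) (x y : T) (p : seq T) : Prop :=
  [/\ path e x p, last x p = y &
      forall q : seq T, path e x q -> last x q = y -> size p <= size q].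

(* Internal vertices of the path x :: p : all vertices except the two ends. *)
Definition internal (T : Type) (x : T) (p : seq T) : seq T := behead (belast x p).

Definition X_visible (T : finType) (e : rel T) (X : {set T}) (x y : T) : Prop :=
  exists p : seq T, shortest_path e x y p /\ all (fun v => v \notin X) (internal x p).

Definition total_mutual_visibility (T : finType) (e : rel T) (X : {set T}) : Prop :=
  forall x y : T, X_visible e X x y.

Definition mu_t (T : finType) (e : rel T) : nat :=
  \max_(X : {set T} | `[< total_mutual_visibility e X >]) #|X|.

Definition simplicial (T : finType) (e : rel T) (v : T) : bool :=
  [forall u, forall w, (e v u && e v w && (u != w)) ==> e u w].

Definition simplicial_set (T : finType) (e : rel T) : {set T} :=
  [set v | simplicial e v].

Definition independent_set (T : finType) (e : rel T) (A : {set T}) : Prop :=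
  forall u v, u \in A -> v \in A -> ~~ e u v.

(* Main.v *)
Require Import Defs.
From mathcomp Require Import all_boot.
From mathcomp Require Import boolp zify.
Set Implicit Arguments. Unset Strict Implicit. Unset Printing Implicit Defensive.

Section Basic.
Variables (T : finType) (e : rel T).

Lemma internal_sub x (p : seq T) y : y \in internal x p -> y \in p.
Proof. case: p => [|a p] //=; exact: mem_belast. Qed.

Lemma internal_rcons x (s : seq T) z : internal x (rcons s z) = s.
Proof. by rewrite /internal belast_rcons. Qed.

Lemma internal_split x (p : seq T) v : v \in internal x p ->
  exists p1 w p2, p = p1 ++ v :: w :: p2.
Proof.
case: p => [|a p] //=.
elim: p a => [|b p IH] a //=.
rewrite in_cons => /orP [/eqP -> | H].
  by exists [::], b, p.
have [p1 [w [p2 E]]] := IH _ H.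
by exists (a :: p1), w, p2; rewrite E.
Qed.

Lemma simplicial_not_internal x y p v :
  symmetric e -> shortest_path e x y p -> v \in internal x p -> ~~ simplicial e v.
Proof.
move=> sym [pp lp sh] /internal_split [p1 [w [p2 E]]].
apply/negP => /forallP /(_ (last x p1)) /forallP /(_ w) /implyP Hs.
subst p.
move: pp; rewrite cat_path /= => /and4P [pp1 euv evw pp2].
case: (eqVneq (last x p1) w) => [Euw | Nuw].
  have := sh (p1 ++ p2); rewrite cat_path pp1 Euw pp2 last_cat.
  rewrite last_cat /= in lp; rewrite -lp Euw /= => /(_ isT erefl).
  by rewrite !size_cat /= -addSnnS leqNgt addnS ltnS leqnSn.
have euw : e (last x p1) w by apply: Hs; rewrite sym euv evw Nuw.
have := sh (p1 ++ w :: p2); rewrite cat_path pp1 /= euw pp2 last_cat /=.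
rewrite last_cat /= in lp; rewrite lp => /(_ isT erefl).
rewrite !size_cat /=. move=> H. by move: H; rewrite addnS ltnn.
Qed.

Lemma shortest_exists x y : connect e x y -> exists p, shortest_path e x y p.
Proof.
move=> /connectP [p0 pp0 lp0].
pose P n := `[< exists p, [/\ path e x p, last x p = y & size p = n] >].
have exP : exists n, P n by exists (size p0); apply/asboolP; exists p0.
case: (ex_minnP exP) => n /asboolP [p [pp lp sp]] Hmin.
exists p; split => // q pq lq; rewrite sp; apply: Hmin.
by apply/asboolP; exists q.
Qed.

Lemma mu_t_ge (X : {set T}) : total_mutual_visibility e X -> #|X| <= mu_t e.
Proof. by move=> H; apply: (@leq_bigmax_cond _ (fun X => `[< total_mutual_visibility e X >])); apply/asboolP. Qed.

Lemma mu_t_attained : connected_graph e ->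
  exists X : {set T}, total_mutual_visibility e X /\ #|X| = mu_t e.
Proof.
move=> conn.
have H0 : total_mutual_visibility e set0.
  move=> x y; have [p sp] := shortest_exists (conn x y).
  exists p; split => //; apply/allP => v _; by rewrite in_set0.
rewrite /mu_t (@bigmax_eq_arg _ set0); last by apply/asboolP.
set X := [arg max_(i > set0 | _) _].
exists X; split => //.
rewrite /X; case: arg_maxnP; first by apply/asboolP.
by move=> i /asboolP.
Qed.

End Basic.

Fixpoint prj (A : eqType) (B : Type) (pi : B -> A) (x : B) (r : seq B) : seq A :=
  if r is y :: r' then (if pi x == pi y then prj pi y r' else pi y :: prj pi y r')
  else [::].

Section Prod.
Variables (T U : finType) (e : rel T) (f : rel U).
Local Notation P := (cart_rel e f).

Lemma prj1_path x r : path P x r ->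
  path e x.1 (prj fst x r) /\ last x.1 (prj fst x r) = (last x r).1.
Proof.
elim: r x => [|y r IH] x //= /andP [Pxy pr].
have [pp lp] := IH _ pr.
case: eqP => [E|/eqP N]; first by rewrite E.
move: Pxy; rewrite /cart_rel (negbTE N) /= => /andP [exy _].
by rewrite /= exy pp lp.
Qed.

Lemma prj2_path x r : path P x r ->
  path f x.2 (prj snd x r) /\ last x.2 (prj snd x r) = (last x r).2.
Proof.
elim: r x => [|y r IH] x //= /andP [Pxy pr].
have [pp lp] := IH _ pr.
case: eqP => [E|/eqP N]; first by rewrite E.
move: Pxy; rewrite /cart_rel (negbTE N) andbF orbF => /andP [_ fxy].
by rewrite /= fxy pp lp.
Qed.

Lemma prj_size x r : path P x r ->
  size (prj fst x r) + size (prj snd x r) <= size r.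
Proof.
elim: r x => [|y r IH] x //= /andP [Pxy pr].
have := IH _ pr.
case: eqP => E1; case: eqP => E2 /=.
- by move=> H; apply: leqW.
- by rewrite addnS.
- by rewrite addSn.
- by move: Pxy; rewrite /cart_rel; move: E1 E2 => /eqP/negbTE -> /eqP/negbTE ->; rewrite !andbF.
Qed.

Lemma prj2_nil x r : prj snd x r = [::] -> all (fun y : T * U => y.2 == x.2) r.
Proof.
elim: r x => [|y r IH] x //=.
case: eqP => // E /IH; rewrite E eqxx => ->. done.
Qed.

Lemma lift1_path h g s : path e g s -> path P (g, h) (map (fun a => (a, h)) s).
Proof.
elim: s g => [|a s IH] g //= /andP [ega ps].
by rewrite IH // /cart_rel /= ega eqxx orbT.
Qed.

Lemma lift2_path g h s : path f h s -> path P (g, h) (map (pair g) s).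
Proof.
elim: s h => [|a s IH] h //= /andP [fha ps].
by rewrite IH // /cart_rel /= fha eqxx.
Qed.

Lemma dist_lb g g' h h' p q r :
  shortest_path e g g' p -> shortest_path f h h' q ->
  path P (g, h) r -> last (g, h) r = (g', h') -> size p + size q <= size r.
Proof.
move=> [_ _ shp] [_ _ shq] pr lr.
have [p1 l1] := prj1_path pr; have [p2 l2] := prj2_path pr.
rewrite lr /= in l1 l2.
apply: leq_trans (prj_size pr).
by apply: leq_add; [apply: shp | apply: shq].
Qed.

Lemma all2_path x r : irreflexive f -> path P x r -> all (fun y : T * U => y.2 == x.2) r ->
  path e x.1 (map fst r).
Proof.
move=> irr; elim: r x => [|y r IH] x //= /andP [Pxy pr] /andP [/eqP E ar].
move: Pxy; rewrite /cart_rel E irr andbF /= => /andP [exy _].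
rewrite exy IH //; apply/allP => z zr; rewrite E; exact: (allP ar).
Qed.

Lemma layer1 g1 g2 h p : irreflexive f ->
  shortest_path P (g1, h) (g2, h) p ->
  all (fun y : T * U => y.2 == h) p /\ shortest_path e g1 g2 (map fst p).
Proof.
move=> irr [pp lp sh].
have [p1 l1] := prj1_path pp.
rewrite lp /= in l1.
have H1 : size p <= size (prj fst (g1, h) p).
  rewrite -[X in _ <= X](size_map (fun a => (a, h))); apply: sh; first exact: lift1_path.
  by rewrite (last_map (fun a => (a, h)) _ g1) l1.
have Hs := prj_size pp.
have : size (prj snd (g1, h) p) = 0.
  by apply/eqP; rewrite -leqn0 -(leq_add2l (size (prj fst (g1, h) p))) addn0 (leq_trans Hs H1).
move/size0nil/prj2_nil => /= A.
split => //; split.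
- by have := all2_path irr pp A.
- by rewrite (last_map fst _ (g1, h)) lp.
- move=> q pq lq; rewrite size_map -(size_map (fun a => (a, h)) q); apply: sh; first exact: lift1_path.
  by rewrite (last_map (fun a => (a, h)) _ g1) lq.
Qed.

End Prod.

Lemma cart_swap (T U : finType) (e : rel T) (f : rel U) x y :
  cart_rel f e (swap_pair x) (swap_pair y) = cart_rel e f x y.
Proof. by rewrite /cart_rel /= orbC andbC [_ && (_ == _)]andbC. Qed.

Lemma path_swap (T U : finType) (e : rel T) (f : rel U) x r :
  path (cart_rel f e) (swap_pair x) (map swap_pair r) = path (cart_rel e f) x r.
Proof. by elim: r x => [|y r IH] x //=; rewrite IH cart_swap. Qed.

Lemma layer2 (T U : finType) (e : rel T) (f : rel U) g h1 h2 p : irreflexive e ->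
  shortest_path (cart_rel e f) (g, h1) (g, h2) p ->
  all (fun y : T * U => y.1 == g) p /\ shortest_path f h1 h2 (map snd p).
Proof.
move=> irr [pp lp sh].
have : shortest_path (cart_rel f e) (h1, g) (h2, g) (map swap_pair p).
  split.
  - by rewrite -(path_swap e f (g, h1)) in pp.
  - by rewrite (last_map swap_pair _ (g, h1)) lp.
  - move=> q pq lq; rewrite size_map.
    have := sh (map swap_pair q); rewrite size_map; apply.
    + by rewrite -(path_swap e f (g, h1)) (mapK swap_pairK).
    + by rewrite (last_map swap_pair _ (h1, g)) lq.
move/(layer1 irr) => [A]; rewrite -map_comp => H; split => //.
by rewrite all_map in A.
Qed.

Section Main.
Variables (T U : finType) (e : rel T) (f : rel U).
Hypotheses (se : simple_graph e) (sf : simple_graph f).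
Local Notation S := (simplicial_set e).

Lemma internal_map (A B : eqType) (pi : A -> B) x p :
  internal (pi x) (map pi p) = map pi (internal x p).
Proof. by rewrite /internal belast_map behead_map. Qed.

Lemma upper (Z : {set T * U}) : mu_t e = #|S| ->
  total_mutual_visibility (cart_rel e f) Z -> #|Z| <= #|S| * mu_t f.
Proof.
move=> mue HZ.
case: se => syme irre; case: sf => symf irrf.
have HS : forall h, [set g | (g, h) \in Z] \subset S.
  move=> h; set A := [set g | (g, h) \in Z] :|: S.
  have tA : total_mutual_visibility e A.
    move=> g1 g2; have [p [sp ip]] := HZ (g1, h) (g2, h).
    have [Aall sp'] := layer1 irrf sp.
    exists (map fst p); split => //; apply/allP => v vi.
    have ns := simplicial_not_internal syme sp' vi.
    have E : internal g1 (map fst p) = map fst (internal (g1, h) p).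
      by rewrite -internal_map.
    move: vi ns; rewrite E => /mapP [y yi ->] ns.
    rewrite !inE negb_or; apply/andP; split=> //.
    have /eqP <- := allP Aall _ (internal_sub yi).
    by rewrite -surjective_pairing (allP ip).
  have : S == A by rewrite eqEcard subsetUr -mue mu_t_ge.
  by move/eqP => ->; rewrite subsetUl.
have HB : forall g, #|[set h | (g, h) \in Z]| <= mu_t f.
  move=> g; apply: mu_t_ge => h1 h2.
  have [p [sp ip]] := HZ (g, h1) (g, h2).
  have [Aall sp'] := layer2 irre sp.
  exists (map snd p); split => //; apply/allP => v.
  have -> : internal h1 (map snd p) = map snd (internal (g, h1) p).
    by rewrite -internal_map.
  move=> /mapP [y yi ->]; rewrite inE.
  have /eqP <- := allP Aall _ (internal_sub yi).
  by rewrite -surjective_pairing (allP ip).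
rewrite -sum1_card (partition_big fst (mem S)); last first.
  move=> [g h] /= zi; apply: (subsetP (HS h)); by rewrite inE.
rewrite -sum_nat_const; apply: leq_sum => g gS.
rewrite (eq_bigl (mem [set x in Z | x.1 == g])); last by move=> x; rewrite !inE.
rewrite sum1_card; apply: leq_trans (HB g).
have inj : injective (@pair T U g) by move=> b1 b2 E; case: E.
rewrite -(card_imset _ inj); apply: subset_leq_card.
apply/subsetP => [[a b]]; rewrite !inE /= => /andP [zi /eqP E]; subst a.
by apply/imsetP; exists b; rewrite ?inE.
Qed.

Lemma lower (Y : {set U}) : connected_graph e ->
  independent_set e S -> total_mutual_visibility f Y ->
  total_mutual_visibility (cart_rel e f) (setX S Y).
Proof.
move=> conne ind HY [g h] [g' h'].
case: se => syme irre.
have [Q [sQ iQ]] := HY h h'.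
have [Pp sP] := shortest_exists (conne g g').
have fin : forall r, path (cart_rel e f) (g, h) r -> last (g, h) r = (g', h') ->
    size r = size Pp + size Q ->
    (forall y, y \in internal (g, h) r -> (y.1 \notin S) || (y.2 \notin Y)) ->
    X_visible (cart_rel e f) (setX S Y) (g, h) (g', h').
  move=> r pr lr sr Hi; exists r; split.
    split => // q pq lq; rewrite sr; exact: dist_lb sP sQ pq lq.
  by apply/allP => [[a b]] /Hi; rewrite in_setX negb_and.
have [pP lP _] := sP; have [pQ lQ _] := sQ.
move: fin sP pP lP; case: (lastP Pp) => [|P1 g0] fin sP pP lP.
  rewrite /= in lP; subst g'.
  apply: (fin (map (pair g) Q)).
  - exact: lift2_path.
  - by rewrite (last_map (pair g) Q h) lQ.
  - by rewrite size_map.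
  - move=> y; rewrite (internal_map (pair g) h) => /mapP [b bi ->] /=.
    by rewrite (allP iQ _ bi) orbT.
rewrite last_rcons in lP; subst g0.
have nS : forall z, z \in P1 -> z \notin S.
  move=> z zi; rewrite inE; apply: (simplicial_not_internal syme sP).
  by rewrite internal_rcons.
case: P1 fin nS sP pP => [|a1 P0] fin nS sP pP.
  have egg : e g g' by move: pP => /= /andP [].
  case: (boolP (g' \in S)) => g'S.
    have gS : g \notin S by apply/negP => gS; move: (ind _ _ gS g'S); rewrite egg.
    apply: (fin (rcons (map (pair g) Q) (g', h'))).
    - rewrite rcons_path lift2_path //= (last_map (pair g) Q h) lQ.
      by rewrite /cart_rel /= egg eqxx orbT.
    - by rewrite last_rcons.
    - by rewrite !size_rcons size_map.
    - move=> y; rewrite internal_rcons => /mapP [b _ ->] /=; by rewrite gS.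
  apply: (fin ((g', h) :: map (pair g') Q)).
  - rewrite /= lift2_path // /cart_rel /= egg eqxx orbT //.
  - by rewrite /= (last_map (pair g') Q h) lQ.
  - by rewrite /= size_map.
  - move=> y /internal_sub; rewrite inE => /orP [/eqP -> /= | /mapP [b _ ->] /=];
    by rewrite g'S.
move: pP; rewrite /= => /andP [ega1 pP0].
apply: (fin ((a1, h) :: map (pair a1) Q ++ map (fun a => (a, h')) (rcons P0 g'))).
- rewrite /= {1}/cart_rel /= ega1 eqxx orbT /= cat_path lift2_path //=.
  by rewrite (last_map (pair a1) Q h) lQ lift1_path.
- by rewrite /= map_rcons last_cat last_rcons.
- rewrite /= size_cat !size_map !size_rcons /=; lia.
- move=> y; rewrite map_rcons -rcons_cat -rcons_cons internal_rcons inE.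
  move=> /orP [/eqP -> /= | ]; first by rewrite nS // inE eqxx.
  rewrite mem_cat => /orP [/mapP [b _ ->] /= | /mapP [a ai ->] /=].
    by rewrite nS // inE eqxx.
  by rewrite nS // inE ai orbT.
Qed.
End Main.

Theorem theorem5p6 (T U : finType) (e : rel T) (f : rel U) :
  simple_graph e -> connected_graph e ->
  simple_graph f -> connected_graph f ->
  independent_set e (simplicial_set e) ->
  mu_t e = #|simplicial_set e| ->
  mu_t (cart_rel e f) = (mu_t e * mu_t f)%N.
Proof.
move=> se ce sf cf ind mue.
apply/eqP; rewrite eqn_leq; apply/andP; split.
  rewrite mue; apply/bigmax_leqP => Z /asboolP HZ; exact: upper.
have [Y [tY cY]] := mu_t_attained cf.
rewrite mue -cY -cardsX; apply: mu_t_ge; exact: lower.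
Qed.
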